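(* Let $k, r, a, b, m, n$ be integers satisfying $$k\geq 1,\quad 0\leq a\leq m,\quad n\geq km-r,\quad \max\{0,ka-r\}\leq b\leq n.$$ Let $L_{k,r}(a,b;m,n)$ be the set of lattice paths from $(a,b)$ to $(m,n)$ with unit steps $(1,0)$ and $(0,1)$ that stay weakly above the line $y=kx-r$. Then $$|L_{k,r}(a,b;m,n)|=\sum_{i=0}^{\lfloor\frac{b+r-ka}{k+1}\rfloor}(-1)^i\,\frac{n+r+1-km}{n+r+1-k(a+i)}\binom{m+n+r-(k+1)(a+i)}{m-a-i}\binom{b+r-k(a+i)}{i}.$$
   Context: Lattice paths use unit steps $(1,0)$ and $(0,1)$. A path stays weakly above the line $y=qx-r$ if every lattice point $(x,y)$ on it satisfies $y\geq qx-r$. $\lfloor x\rfloor$ is the largest integer not exceeding $x$. Binomial coefficients $\binom{N}{j}$ with $N\ge 0$ are the usual ones and equal $0$ when $j<0$ or $j>N$. *)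

(* Defs.v *)
From HB Require Import structures.
From mathcomp Require Import all_boot all_order all_algebra.
Set Implicit Arguments. Unset Strict Implicit. Unset Printing Implicit Defensive.
Import Order.TTheory GRing.Theory Num.Theory.
Local Open Scope ring_scope.

(* A lattice path starting at (a,b) is encoded by its step sequence:
   [true] = east step (1,0), [false] = north step (0,1). *)

Definition path_point (a b : int) (s : seq bool) (j : nat) : int * int :=
  (a + (count id (take j s))%:Z, b + (count negb (take j s))%:Z).

Definition stays_above (q r a b : int) (s : seq bool) : bool :=
  [forall j : 'I_(size s).+1,
     q * (path_point a b s j).1 - r <= (path_point a b s j).2].

Definition L_card (q r a b m n : int) : nat :=
  #|[set t : ((`|m - a| + `|n - b|)%N).-tuple bool |
       (count id t == `|m - a|%N) && stays_above q r a b t]|.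

Definition binz (N j : int) : nat :=
  if (0 <= N) && (0 <= j) then 'C(`|N|, `|j|) else 0%N.

(* Main.v *)
Require Import Defs.
From HB Require Import structures.
From mathcomp Require Import all_boot all_order all_algebra.
From mathcomp Require Import ring lra zify.
Import Order.TTheory GRing.Theory Num.Theory.
Local Open Scope ring_scope.

Definition A (K N' j : nat) : rat :=
  (N'.+1)%:R * ((N' + K.+1 * j)`!)%:R / ((j`!)%:R * ((N'.+1 + K*j)`!)%:R).

Lemma fact_neq0 n : (n`!)%:R != 0 :> rat.
Proof. by rewrite pnatr_eq0 -lt0n fact_gt0. Qed.

Lemma pos1 n : 1 + n%:R != 0 :> rat.
Proof. by rewrite addrC natr1 pnatr_eq0. Qed.

Lemma A0 K N' : A K N' 0 = 1.
Proof.
rewrite /A !muln0 !addn0 fact0 factS natrM mul1r.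
have := fact_neq0 N'. move=> h. field. by rewrite h pos1.
Qed.

Lemma A2 K j : A K 0 j.+1 = A K K j.
Proof.
rewrite /A.
have -> : (0 + K.+1 * j.+1 = (K + K.+1 * j).+1)%N by lia.
have -> : (1 + K * j.+1 = (K.+1 + K*j))%N by lia.
rewrite (factS (K + K.+1 * j)) (factS j).
have := fact_neq0 (K + K.+1 * j); have := fact_neq0 j; have := fact_neq0 (K.+1 + K*j).
set f1 := (K + K.+1 * j)`!; set f2 := j`!; set f3 := (K.+1 + K*j)`!.
move=> h1 h2 h3; clearbody f1 f2 f3.
rewrite !natrM.
have e : ((K + K.+1 * j).+1)%:R = (K.+1)%:R * (j.+1)%:R :> rat by rewrite -natrM; congr (_%:R); lia.
rewrite e.
field. by rewrite ?h1 ?h2 ?h3 ?pos1.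
Qed.

Lemma A1 K N' j : A K N'.+1 j.+1 = A K N' j.+1 + A K (N'.+1 + K) j.
Proof.
rewrite /A.
set Z := (N' + K.+1 * j.+1)%N. set E := (N'.+1 + K * j.+1)%N.
have -> : (N'.+1 + K.+1 * j.+1 = Z.+1)%N by rewrite /Z; lia.
have -> : (N'.+2 + K * j.+1 = E.+1)%N by rewrite /E; lia.
have -> : (N'.+1 + K + K.+1 * j = Z)%N by rewrite /Z; lia.
have -> : ((N'.+1 + K).+1 + K * j = E.+1)%N by rewrite /E; lia.
rewrite (factS Z) (factS E) (factS j).
have eZ : (Z.+1)%:R = (E%:R + (j.+1)%:R) :> rat by rewrite -natrD; congr (_%:R); rewrite /Z /E; lia.
have eE : (E%:R) = (N'.+1)%:R + K%:R * (j.+1)%:R :> rat by rewrite -natrM -natrD.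
have := fact_neq0 Z; have := fact_neq0 j; have := fact_neq0 E.
set f1 := Z`!; set f2 := j`!; set f3 := E`!.
move=> h1 h2 h3; clearbody f1 f2 f3.
have eE1 : (E.+1)%:R = N'.+2%:R + K%:R * j.+1%:R :> rat.
  by rewrite -natrM -natrD /E; congr (_%:R); lia.
rewrite !natrM eZ eE1 eE.
have -> : ((N'.+1 + K).+1)%:R = (N'.+2)%:R + K%:R :> rat by rewrite -natrD.
clearbody Z E.
field. rewrite ?h1 ?h2 ?h3 ?pos1 /= ?andbT; apply/eqP => H.
have := ler0n rat N'; have := ler0n rat K; have := ler0n rat j; nra.
Qed.

Definition C' (K c i : nat) : nat := if (K * i <= c)%N then 'C(c - K*i, i) else 0.

Lemma C'0 K c : C' K c 0 = 1%N.
Proof. by rewrite /C' muln0 leq0n bin0. Qed.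

Lemma C'S K c i : C' K c.+1 i.+1 = (C' K c i.+1 + (if (K <= c)%N then C' K (c-K) i else 0))%N.
Proof.
rewrite /C'.
have [h|h] := leqP (K * i.+1) c.
  have hK : (K <= c)%N by move: h; rewrite mulnS; lia.
  have -> : (K * i.+1 <= c.+1)%N by lia.
  rewrite ?h hK.
  have -> : (K * i <= c - K)%N by move: h; rewrite mulnS; lia.
  have -> : (c.+1 - K * i.+1 = (c - K * i.+1).+1)%N by lia.
  have -> : (c - K - K * i = c - K * i.+1)%N by rewrite mulnS; lia.
  by rewrite binS.
rewrite add0n.
have e : (K <= c)%N -> (K * i <= c - K)%N = false.
  move=> hK; apply/negbTE; move: h; rewrite mulnS; lia.
case: leqP => h2.
  have -> : (c.+1 - K * i.+1 = 0)%N by lia.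
  rewrite bin0n /=. by case: ifP => // /e ->.
by case: ifP => // /e ->.
Qed.

Definition F (K M c N' : nat) : rat :=
  \sum_(i < M.+1) (-1)^+i * A K N' (M - i) * (C' K c i)%:R.

Lemma F0 K c N' : F K 0 c N' = 1.
Proof. by rewrite /F big_ord1 /= A0 C'0 !mul1r. Qed.

Lemma FII K M c N' :
  F K M.+1 c.+1 N' + (if (K <= c)%N then F K M (c-K) N' else 0) = F K M.+1 c N'.
Proof.
rewrite /F big_ord_recl [in RHS]big_ord_recl !C'0 !subn0 -addrA; congr (_ + _).
under eq_bigr => i _ do rewrite /= /bump /= subSS C'S natrD mulrDr.
under [in RHS]eq_bigr => i _ do rewrite /= /bump /= subSS.
rewrite big_split /= -addrA [X in _ + X = _](_ : _ = 0) ?addr0 //.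
case: ifP => hK; last by rewrite addr0; apply: big1 => i _; rewrite mulr0.
rewrite -big_split /=; apply: big1 => i _; rewrite exprS; ring.
Qed.

Lemma FIV K M c N' : F K M.+1 c N'.+1 = F K M.+1 c N' + F K M c (N'.+1 + K).
Proof.
rewrite /F big_ord_recr [in X in X + _]big_ord_recr /= !subnn !A0 addrAC; congr (_ + _).
rewrite -big_split /=; apply: eq_bigr => i _.
have -> : (M.+1 - i = (M - i).+1)%N by have := ltn_ord i; lia.
rewrite A1; ring.
Qed.

Lemma FV K M c : F K M.+1 c 0 = F K M c K + (-1)^+M.+1 * (C' K c M.+1)%:R.
Proof.
rewrite /F big_ord_recr /= subnn A0 mulr1; congr (_ + _).
apply: eq_bigr => i _.
have -> : (M.+1 - i = (M - i).+1)%N by have := ltn_ord i; lia.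
by rewrite A2.
Qed.

Lemma W K M N' : F K M (N' + K*M) N' = 1.
Proof.
elim: M N' => [|M IH] N'; first by rewrite F0.
elim: N' => [|N' IHN].
  rewrite add0n FV.
  have -> : (K * M.+1 = K + K * M)%N by rewrite mulnS.
  by rewrite IH /C' mulnS leqnn subnn bin0n /=; ring.
have Z0 : F K M.+1 (N'.+1 + K * M.+1) N' = 0.
  have := FII K M (N' + K * M.+1) N'.
  have -> : (K <= N' + K * M.+1)%N by rewrite mulnS; lia.
  have -> : (N' + K * M.+1 - K = N' + K * M)%N by rewrite mulnS; lia.
  rewrite IH IHN.
  have -> : ((N' + K * M.+1).+1 = N'.+1 + K * M.+1)%N by lia.
  by move/(canRL (addrK 1)); rewrite subrr.
rewrite FIV Z0 add0r.
have -> : (N'.+1 + K * M.+1 = (N'.+1 + K) + K * M)%N by rewrite mulnS; lia.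
by rewrite IH.
Qed.

Definition G n (p : pred (seq bool)) : nat := #|[set t : n.-tuple bool | p t]|.

Lemma eq_G n p q : p =1 q -> G n p = G n q.
Proof. by move=> e; rewrite /G; apply: eq_card => t; rewrite !inE e. Qed.

Lemma Gsum n p : G n p = (\sum_(t : n.-tuple bool) (p t : nat))%N.
Proof. by rewrite /G -sum1_card big_mkcond; apply: eq_bigr => t _; rewrite inE; case: (p t). Qed.

Lemma G0 p : G 0 p = p [::].
Proof.
rewrite Gsum (big_pred1 [tuple]) //= => t; apply/esym/eqP; exact: tuple0.
Qed.

Lemma GS n p : G n.+1 p = (G n (fun s => p (true::s)) + G n (fun s => p (false::s)))%N.
Proof.
rewrite !Gsum (reindex (fun x : bool * n.-tuple bool => [tuple of x.1 :: x.2])) /=.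
  rewrite -(pair_bigA _ (fun (x : bool) (t : n.-tuple bool) => p (x :: t) : nat)) /= big_bool. by [].
exists (fun t : n.+1.-tuple bool => (thead t, [tuple of behead t])).
  by case=> x t _ /=; congr (_, _); apply: val_inj.
move=> t _ /=; apply: val_inj => /=. by rewrite [t]tuple_eta.
Qed.

Fixpoint ok (q h : int) (s : seq bool) : bool :=
  (0 <= h) && (if s is x :: s' then ok q (if x then h - q else h + 1) s' else true).

Lemma forallS n (P : pred nat) :
  [forall j : 'I_n.+1, P j] = P 0%N && [forall j : 'I_n, P j.+1].
Proof.
apply/forallP/andP.
  move=> H; split; first exact: (H ord0).
  by apply/forallP => j; exact: (H (lift ord0 j)).
case=> H0 /forallP H [[|j] hj] //=.
exact: (H (Ordinal (hj : (j < n)%N))).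
Qed.

Lemma forall0 (P : pred 'I_0) : [forall j, P j].
Proof. by apply/forallP => -[]. Qed.

Lemma stays_ok q r a b s : stays_above q r a b s = ok q (b + r - q*a) s.
Proof.
elim: s a b => [|x s IH] a b.
  rewrite /stays_above /=.
  rewrite (forallS 0 (fun j => q * (path_point a b [::] j).1 - r <= (path_point a b [::] j).2)).
  rewrite /path_point /= !addr0 andbT.
  rewrite [X in _ && X]forall0 andbT.
  by rewrite subr_ge0 lerBlDr addrC.
rewrite /stays_above /=.
rewrite (forallS _ (fun j => q * (path_point a b (x :: s) j).1 - r <= (path_point a b (x :: s) j).2)).
rewrite /path_point /= !addr0.
case: x.
  have e : b + r - q*a - q = b + r - q*(a+1) by ring.
  rewrite e -IH /stays_above /path_point; congr andb; first by rewrite subr_ge0 lerBlDr addrC.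
  by apply: eq_forallb => j /=; rewrite !PoszD !addrA.
have e : b + r - q*a + 1 = (b+1) + r - q*a by ring.
rewrite e -IH /stays_above /path_point; congr andb; first by rewrite subr_ge0 lerBlDr addrC.
by apply: eq_forallb => j /=; rewrite !PoszD !addrA.
Qed.


Definition Pn (K n M : nat) (h : int) : nat :=
  G n (fun s => (count id s == M) && ok K%:Z h s).

Lemma Pn0 K M h : Pn K 0 M h = ((M == 0%N) && (0 <= h)).
Proof. by rewrite /Pn G0 /= andbT eq_sym. Qed.

Lemma Pn_neg K n M h : h < 0 -> Pn K n M h = 0%N.
Proof.
move=> hh; rewrite /Pn Gsum big1 // => t _.
case: t => [[|x s] _] /=; by rewrite leNgt hh /= andbF.
Qed.

Lemma Pn_big K n M h : (n < M)%N -> Pn K n M h = 0%N.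
Proof.
move=> hn; rewrite /Pn Gsum big1 // => t _.
have := count_size id t; rewrite size_tuple => hc.
by have -> : (count id t == M) = false by apply/negbTE; lia.
Qed.

Lemma PnS K n M h : Pn K n.+1 M h =
  if 0 <= h then ((if M is M'.+1 then Pn K n M' (h - K%:Z) else 0) + Pn K n M (h+1))%N else 0%N.
Proof.
case: (leP 0 h) => hh; last by rewrite Pn_neg.
rewrite /Pn GS; congr addn.
  case: M => [|M].
    by rewrite Gsum big1 // => t _.
  by apply: eq_G => s /=; rewrite eqSS hh.
by apply: eq_G => s /=; rewrite hh.
Qed.

Lemma mainlem K n : forall M T c, (M + T = n)%N -> (K*M <= T + c)%N ->
  (Pn K n M c%:Z)%:R = F K M c (T + c - K*M).
Proof.
elim: n => [|n IH] M T c hn hc.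
  have [-> ->] : M = 0%N /\ T = 0%N by lia.
  by rewrite Pn0 F0.
rewrite PnS lez_nat leq0n.
case: M hn hc => [|M] hn hc.
  rewrite add0n (_ : c%:Z + 1 = c.+1%:Z); last by rewrite -addn1 PoszD.
  have := IH 0%N n c.+1 (add0n n); rewrite F0 => -> //; [by rewrite F0 | lia].
case: T hn hc => [|T] hn hc.
  rewrite (@Pn_big K n M.+1) ?addn0; last lia.
  have hKc : (K <= c)%N by move: hc; rewrite mulnS; lia.
  rewrite (subzn hKc) (IH M 0%N (c - K)%N); [|lia|move: hc; rewrite mulnS; lia].
  set N' := (c - K * M.+1)%N.
  have -> : (0 + (c - K) - K * M = N')%N by rewrite /N' mulnS; lia.
  have -> : (c - K = N' + K * M)%N by move: hc; rewrite /N' mulnS; lia.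
  have hc' : (c = N' + K * M.+1)%N by move: hc; rewrite /N'; lia.
  clearbody N'; by rewrite hc' !W.
rewrite natrD -(FII K M c (T.+1 + c - K * M.+1)) addrC.
rewrite (_ : c%:Z + 1 = c.+1%:Z); last by rewrite -addn1 PoszD.
rewrite (IH M.+1 T c.+1); [|lia|lia].
have -> : (T + c.+1 - K * M.+1 = T.+1 + c - K * M.+1)%N by lia.
congr (_ + _).
case: leqP => hKc.
  rewrite (subzn hKc) (IH M T.+1 (c - K)%N); [|lia|move: hc; rewrite mulnS; lia].
  congr F; move: hc; rewrite mulnS; lia.
by rewrite Pn_neg // subr_lt0 ltz_nat.
Qed.

Lemma natzR n : (n%:Z)%:~R = n%:R :> rat.
Proof. by []. Qed.

Lemma binz_nat x y : binz x%:Z y%:Z = 'C(x, y).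
Proof. by []. Qed.

Lemma binz_negr x y : y < 0 -> binz x y = 0%N.
Proof. by move=> h; rewrite /binz (leNgt 0 y) h andbF. Qed.

Lemma binz_negl x y : x < 0 -> binz x y = 0%N.
Proof. by move=> h; rewrite /binz (leNgt 0 x) h. Qed.

Lemma Aeq K N' j : A K N' j = N'.+1%:R / (N'.+1 + K*j)%:R * 'C(N' + K.+1*j, j)%:R.
Proof.
rewrite /A.
have hj : (j <= N' + K.+1 * j)%N by lia.
have := bin_fact hj.
have -> : (N' + K.+1 * j - j = N' + K * j)%N by lia.
have -> : (N'.+1 + K * j = (N' + K * j).+1)%N by lia.
rewrite (factS (N' + K*j)).
have := fact_neq0 j; have := fact_neq0 (N' + K*j).
set f1 := (N' + K.+1 * j)`!; set f2 := j`!; set f3 := (N' + K*j)`!.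
set B := 'C(_, _).
move=> h1 h2 e; clearbody f1 f2 f3 B.
rewrite -e !natrM.
have -> : ((N' + K * j).+1)%:R = N'.+1%:R + K%:R * j%:R :> rat.
  by rewrite -natrM -natrD; congr (_%:R); lia.
field. rewrite ?h1 ?h2 /= ?andbT. apply/eqP => H.
have := ler0n rat N'; have := ler0n rat K; have := ler0n rat j; nra.
Qed.

Lemma sum_ext0 (g : nat -> rat) n1 n2 : (n1 <= n2)%N ->
  (forall i, (n1 <= i)%N -> (i < n2)%N -> g i = 0) ->
  \sum_(0 <= i < n1) g i = \sum_(0 <= i < n2) g i.
Proof.
move=> h z; rewrite [RHS](@big_cat_nat _ _ _ n1) //=.
rewrite [X in _ = (_ + X)%R]big1_seq ?addr0 //.
by move=> i /andP[_]; rewrite mem_index_iota => /andP[h1 h2]; apply: z.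
Qed.

Theorem theorem2p1 (k r a b m n : int)
  (hk : 1 <= k) (ha0 : 0 <= a) (ham : a <= m) (hn : k * m - r <= n)
  (hb0 : 0 <= b) (hb1 : k * a - r <= b) (hbn : b <= n) :
  (L_card k r a b m n)%:R =
  \sum_(0 <= i < `|((b + r - k * a) %/ (k + 1))%Z|.+1)
     ((-1) ^+ i *
      (((n + r + 1 - k * m)%:~R / (n + r + 1 - k * (a + i%:Z))%:~R) : rat) *
      (binz (m + n + r - (k + 1) * (a + i%:Z)) (m - a - i%:Z))%:R *
      (binz (b + r - k * (a + i%:Z)) i%:Z)%:R).
Proof.
have [K hK] : exists K : nat, k = K%:Z by exists (absz k); rewrite gez0_abs //; lia.
have [M hM] : exists M : nat, m - a = M%:Z by exists (absz (m - a)); rewrite gez0_abs //; lia.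
have [T hT] : exists T : nat, n - b = T%:Z by exists (absz (n - b)); rewrite gez0_abs //; lia.
have [c hc] : exists c : nat, b + r - k * a = c%:Z by exists (absz (b + r - k * a)%R); rewrite gez0_abs //; lia.
have hKM : (K * M <= T + c)%N.
  rewrite -lez_nat PoszM PoszD -hM -hT -hc -hK; lia.
set N' := (T + c - K * M)%N.
have hN : N'%:Z = T%:Z + c%:Z - K%:Z * M%:Z.
  by rewrite /N' -subzn // PoszD PoszM.
have LE : L_card k r a b m n = Pn K (M + T) M c.
  rewrite /L_card /Pn /G hM hT !absz_nat.
  apply: eq_card => t; rewrite !inE stays_ok hc hK //.
rewrite LE (@mainlem K (M + T) M T c (erefl _) hKM) -/N'.
have hr : r = c%:Z - b + k * a by rewrite -hc; ring.
have hm : m = a + M%:Z by rewrite -hM; ring.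
have hn' : n = b + T%:Z by rewrite -hT; ring.
have hK1 : k + 1 = K.+1%:Z by rewrite hK -addn1 PoszD.
rewrite hc hK1 divz_nat absz_nat.
pose g i := if (i <= M)%N then (-1)^+i * A K N' (M-i) * (C' K c i)%:R else 0.
transitivity (\sum_(0 <= i < (c %/ K.+1).+1) g i).
  rewrite /F -(big_mkord xpredT (fun i => (-1)^+i * A K N' (M-i) * (C' K c i)%:R)).
  have e0 : \sum_(0 <= i < M.+1) (-1)^+i * A K N' (M-i) * (C' K c i)%:R = \sum_(0 <= i < M.+1) g i.
    by apply: eq_big_nat => i /andP[_ hi]; rewrite /g -ltnS hi.
  rewrite e0 (@sum_ext0 g M.+1 (M + c).+1); last 2 first.
  - lia.
  - by move=> i h1 _; rewrite /g leqNgt h1.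
  apply/esym/sum_ext0.
  - have := leq_div c K.+1; lia.
  - move=> i h1 _; rewrite /g; case: ifP => // _.
    rewrite /C'; case: ifP => h2; last by rewrite mulr0.
    rewrite bin_small ?mulr0 //.
    have h3 : (c < i * K.+1)%N by rewrite -ltn_divLR.
    rewrite mulnSr in h3; rewrite mulnC in h2 *; lia.
apply: eq_big_nat => i _; rewrite /g.
case: (leqP i M) => hiM; last first.
  by rewrite (@binz_negr _ (m - a - i%:Z)) ?mulr0 ?mul0r //; rewrite hM; lia.
have e1 : n + r + 1 - k * m = (N'.+1)%:Z.
  by rewrite -addn1 PoszD hN ?hr ?hm ?hn' ?hK; ring.
have e2 : n + r + 1 - k * (a + i%:Z) = (N'.+1 + K * (M - i))%N.
  by rewrite PoszD PoszM -(subzn hiM) -addn1 PoszD hN ?hr ?hm ?hn' ?hK; ring.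
have e3 : m + n + r - K.+1%:Z * (a + i%:Z) = (N' + K.+1 * (M - i))%N.
  by rewrite PoszD PoszM -(subzn hiM) hN ?hr ?hm ?hn' ?hK -addn1 PoszD; ring.
have e4 : m - a - i%:Z = (M - i)%N by rewrite -(subzn hiM) hm; ring.
rewrite e1 e2 e3 e4 binz_nat !natzR Aeq /C'.
have e5 : b + r - k * (a + i%:Z) = c%:Z - (K * i)%N%:Z by rewrite PoszM hr hK; ring.
rewrite e5; case: leqP => h5.
  by rewrite (subzn h5) binz_nat; ring.
by rewrite binz_negl ?mulr0 //; rewrite subr_lt0 ltz_nat.
Qed.
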